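(* Let $p$ be a prime, $R$ an $F$-pure ring of characteristic $p$, and $f\in R$ a non-zero non-unit. Let $d\ge1$ and $\alpha\in[0,1]\cap\frac{1}{p^d}\mathbb{N}$. If for some $e\ge1$ the inclusion $R\cdot f^{\lceil p^e\alpha\rceil/p^e}\subseteq R^{1/p^e}$ splits over $R$, then the inclusion $R\cdot f^{\alpha}\subseteq R^{1/p^d}$ splits over $R$.
   Context: A ring $R$ of characteristic $p$ is $F$-pure if $R\subseteq R^{1/p}$ splits as a map of $R$-modules; such a ring is reduced. Roots. $R^{1/p^e}$ is the ring of formal symbols $r^{1/p^e}$ ($r\in R$), with $r^{1/p^e}+s^{1/p^e}=(r+s)^{1/p^e}$ and $r^{1/p^e}s^{1/p^e}=(rs)^{1/p^e}$. It contains $R$ via $r\mapsto(r^{p^e})^{1/p^e}$. Powers of $f$. For $a\in\mathbb{N}$, $f^{a/p^e}:=(f^a)^{1/p^e}$; in particular $f^\alpha=f^{a/p^d}$ when $\alpha=a/p^d$. Splitting. The inclusion $R\cdot t\subseteq R^{1/p^e}$ splits over $R$ if some $R$-linear $\theta:R^{1/p^e}\to R$ has $\theta(t)=1$. *)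

(* Defs.v *)
From mathcomp Require Import all_boot all_algebra.
Unset Printing Implicit Defensive.
Import GRing.Theory.
Local Open Scope ring_scope.

(* Model of R^{1/p^e}: its elements are the formal symbols r^{1/p^e}, r : R,
   which we identify with r itself (the underlying carrier is a copy of R,
   with the same ring operations).  The R-module structure is
   r . s^{1/p^e} = (r^{p^e} s)^{1/p^e}, and R embeds via r |-> (r^{p^e})^{1/p^e}.
   Hence an R-linear map theta : R^{1/p^e} -> R is a function theta : R -> R
   which is additive and satisfies theta (r^{p^e} * x) = r * theta x. *)
Definition root_linear (R : comUnitRingType) (q : nat) (theta : R -> R) : Prop :=
  (forall x y : R, theta (x + y) = theta x + theta y) /\
  (forall r x : R, theta (r ^+ q * x) = r * theta x).

(* The inclusion R . t  ⊆ R^{1/p^e} (t = the symbol t^{1/p^e}) splits over R. *)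
Definition root_splits (R : comUnitRingType) (p e : nat) (t : R) : Prop :=
  exists theta : R -> R, root_linear R (p ^ e) theta /\ theta t = 1.

(* F-pure: the inclusion R ⊆ R^{1/p}, r |-> (r^p)^{1/p}, splits as a map of
   R-modules. *)
Definition Fpure (R : comUnitRingType) (p : nat) : Prop :=
  exists theta : R -> R, root_linear R p theta /\ (forall r : R, theta (r ^+ p) = r).

Definition ceil_div (m n : nat) : nat := ((m + n.-1) %/ n)%N.

(* Main.v *)
Require Import Defs.
From mathcomp Require Import all_boot all_algebra.
Import GRing.Theory.
Local Open Scope ring_scope.

Lemma frobD_iter (R : comUnitRingType) (p : nat) (hp : p \in [pchar R]) :
  forall n (x y : R), (x + y) ^+ (p ^ n) = x ^+ (p ^ n) + y ^+ (p ^ n).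
Proof.
elim=> [|n IH] x y; first by rewrite !expn0 !expr1.
rewrite expnS !exprM -!(pFrobenius_autE hp) pFrobenius_autD_comm //.
exact: mulrC.
Qed.

Lemma iter_lin (R : comUnitRingType) (p : nat) (phi : R -> R) :
  root_linear R p phi -> (forall r, phi (r ^+ p) = r) ->
  forall n, root_linear R (p ^ n) (iter n phi) /\
            (forall r, iter n phi (r ^+ (p ^ n)) = r).
Proof.
move=> [hD hM] hF; elim=> [|n [[IHD IHM] IHF]].
  by split; [split=> //= r x; rewrite expn0 expr1|move=> r /=; rewrite expn0 expr1].
split; [split|] => /=.
- by move=> x y; rewrite IHD hD.
- by move=> r x; rewrite expnS exprM IHM hM.
- by move=> r; rewrite expnS exprM IHF hF.
Qed.

Theorem mainTheorem9 (p : nat) (R : comUnitRingType) (f : R) (d a : nat) :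
  prime p -> p \in [pchar R] -> Fpure R p ->
  f != 0 -> f \isn't a GRing.unit ->
  (1 <= d)%N -> (a <= p ^ d)%N ->
  (exists e : nat, (1 <= e)%N /\ root_splits R p e (f ^+ ceil_div (p ^ e * a) (p ^ d))) ->
  root_splits R p d (f ^+ a).
Proof.
move=> pp hch [phi [hlin hF]] _ _ _ _ [e [_ [th [[thD thM] th1]]]].
have p0 : (0 < p)%N by apply: prime_gt0.
have pd0 : (0 < p ^ d)%N by rewrite expn_gt0 p0.
case: (leqP d e) => hde.
- pose k := (e - d)%N.
  have he : e = (d + k)%N by rewrite /k subnKC.
  have hc : ceil_div (p ^ e * a) (p ^ d) = (a * p ^ k)%N.
    rewrite /ceil_div he expnD -mulnA mulnC divnMDl // divn_small ?addn0.
      by rewrite mulnC.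
    by rewrite prednK.
  rewrite hc in th1.
  exists (fun x => th (x ^+ (p ^ k))); split; [split|].
  + by move=> x y; rewrite (@frobD_iter R p hch k) thD.
  + by move=> r x; rewrite exprMn -exprM -expnD -he thM.
  + by rewrite -exprM.
- pose k := (d - e)%N.
  have hd : d = (e + k)%N by rewrite /k subnKC // ltnW.
  set c := ceil_div (p ^ e * a) (p ^ d) in th1.
  have hac : (a <= c * p ^ k)%N.
    have := ltn_ceil (p ^ e * a + (p ^ d).-1) pd0.
    rewrite -/(ceil_div _ _) -/c => h.
    have h2 : (p ^ e * a <= c * p ^ d)%N.
      move: h; rewrite mulSn -(prednK pd0) addSn ltnS.
      by rewrite addnC leq_add2l.
    have pe0 : (0 < p ^ e)%N by rewrite expn_gt0 p0.
    rewrite -(leq_pmul2l pe0) mulnCA -expnD -hd.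
    exact: h2.
  have [[iD iM] iF] := @iter_lin R p phi hlin hF k.
  exists (fun x => th (iter k phi (x * f ^+ (c * p ^ k - a)))); split; [split|].
  + by move=> x y; rewrite mulrDl iD thD.
  + by move=> r x; rewrite hd expnD exprM -mulrA iM thM.
  + by rewrite -exprD subnKC // exprM iF.
Qed.
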